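(* Let $m\ge 2$ and $\theta_c(\mathrm{Plu},m)=\frac{m-2}{3m-2}$. For $\theta\in(0,1]$: (i) if $\theta<\theta_c(\mathrm{Plu},m)$ then $\lim_{n\to\infty}\rho(\mathrm{Plu},m,n,\theta)=1$; (ii) if $\theta>\theta_c(\mathrm{Plu},m)$ then $\lim_{n\to\infty}\rho(\mathrm{Plu},m,n,\theta)=0$.
   Context: A ranking is a strict total order on the candidates. A discrete profile $P$ consists of candidates, $n$ voters, and a ranking $P_v$ per voter. Plurality ($\mathrm{Plu}$): each candidate $c$ gets score $s_{\mathrm{Plu}}(c,P)$ equal to the number (total weight) of voters ranking $c$ first; the winner is the candidate with the highest score, ties broken by an arbitrary fixed tie-breaking rule (the result holds for any such rule). CM: the rule $f$ is coalitionally manipulable in a discrete profile $P$ if there is a discrete profile $Q$ with the same candidates and voters such that $f(Q)\ne f(P)$ and every voter $v$ with $Q_v\ne P_v$ prefers $f(Q)$ to $f(P)$ according to $P_v$. Perturbed Culture with parameters $m,n\ge1$, $\theta\in(0,1]$: a random discrete profile with candidates $\{1,\dots,m\}$ and voters $\{1,\dots,n\}$, each voter independently having ranking $1\succ 2\succ\cdots\succ m$ with probability $\theta$ and a uniformly random ranking (among the $m!$) with probability $1-\theta$. The CM rate $\rho(f,m,n,\theta)$ is the probability that $f$ is CM in such a random profile. *)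

(* Defs.v *)
From HB Require Import structures.
From mathcomp Require Import all_boot all_order all_algebra all_fingroup.
From mathcomp Require Import all_classical all_reals all_analysis.
Set Implicit Arguments. Unset Strict Implicit. Unset Printing Implicit Defensive.
Import Order.TTheory GRing.Theory Num.Theory.
Local Open Scope ring_scope.

(* A ranking of the candidates 'I_m is a permutation r : {perm 'I_m}
   mapping each candidate to its position (0 = top). *)
Definition ranking (m : nat) := {perm 'I_m}.

Definition prefers (m : nat) (r : ranking m) (a b : 'I_m) : bool :=
  (val (r a) < val (r b))%N.

Definition profile (m n : nat) := {ffun 'I_n -> ranking m}.

Definition plu_score (m n : nat) (P : profile m n) (c : 'I_m) : nat :=
  #|[set v : 'I_n | val (P v c) == 0%N]|.

Definition plu_top (m n : nat) (P : profile m n) : {set 'I_m} :=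
  [set c | [forall d, (plu_score P d <= plu_score P c)%N]].

Definition tiebreak (m : nat) (tb : {set 'I_m} -> 'I_m) : Prop :=
  forall S : {set 'I_m}, S != finset.set0 -> tb S \in S.

Definition plu (m n : nat) (tb : {set 'I_m} -> 'I_m) (P : profile m n) : 'I_m :=
  tb (plu_top P).

Definition CM (m n : nat) (f : profile m n -> 'I_m) (P : profile m n) : bool :=
  [exists Q : profile m n,
     (f Q != f P) &&
     [forall v : 'I_n, (Q v != P v) ==> prefers (P v) (f Q) (f P)]].

(* probability of profile P under Perturbed Culture with parameter theta:
   each voter independently has the ranking 1 > 2 > ... > m (identity
   permutation) with probability theta, uniform ranking with prob 1 - theta *)
Definition pc_prob (R : realType) (m n : nat) (theta : R) (P : profile m n) : R :=
  \prod_(v : 'I_n) (theta * (P v == 1%g)%:R + (1 - theta) / (m`!)%:R).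

Definition cm_rate (R : realType) (m n : nat) (tb : {set 'I_m} -> 'I_m)
  (theta : R) : R :=
  \sum_(P : profile m n | CM (@plu m n tb) P) pc_prob theta P.

Definition theta_c_plu (R : realType) (m : nat) : R :=
  (m%:R - 2) / (3 * m%:R - 2).

(* Main.v *)
Require Import Defs.
From HB Require Import structures.
From mathcomp Require Import all_boot all_order all_algebra all_fingroup.
From mathcomp Require Import all_classical all_reals all_analysis.
From mathcomp Require Import ring lra.
Import Order.TTheory GRing.Theory Num.Theory.
Import numFieldNormedType.Exports.
Local Open Scope classical_set_scope.
Local Close Scope classical_set_scope.
Local Open Scope ring_scope.
Set Implicit Arguments. Unset Strict Implicit. Unset Printing Implicit Defensive.
Definition pr1 (R : realType) (m : nat) (theta : R) (r : ranking m) : R :=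
  theta * (r == 1%g)%:R + (1 - theta) / (m`!)%:R.
Definition E1 (R : realType) (m : nat) (theta : R) (g : ranking m -> R) : R :=
  \sum_(r : ranking m) pr1 theta r * g r.

Lemma pr1_ge0 (R : realType) (m : nat) (theta : R) (r : ranking m) : 0 <= theta <= 1 -> 0 <= pr1 theta r.
Proof.
case/andP=> t0 t1; rewrite /pr1 addr_ge0 // ?mulr_ge0 // ?divr_ge0 //.
by rewrite subr_ge0.
Qed.

Lemma E1E (R : realType) (m : nat) (theta : R) (g : ranking m -> R) :
  E1 theta g = theta * g 1%g + (1 - theta) / (m`!)%:R * \sum_(r : ranking m) g r.
Proof.
rewrite /E1 /pr1.
under eq_bigr do rewrite mulrDl.
rewrite big_split /= mulr_sumr; congr (_ + _).
rewrite (bigD1 1%g) //= eqxx mulr1 big1 ?addr0 // => r /negbTE ->.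
by rewrite mulr0 mul0r.
Qed.

Lemma card_rank (m : nat) : #|ranking m| = m`!.
Proof. exact: card_Sn. Qed.

Lemma E1_1 (R : realType) (m : nat) (theta : R) : E1 theta (fun _ : ranking m => 1) = 1.
Proof.
rewrite E1E sumr_const card_rank.
have h : (m`!)%:R != 0 :> R by rewrite pnatr_eq0 -lt0n fact_gt0.
rewrite mulr1 -mulr_natr -mulrA mulVf // mulr1; lra.
Qed.

Lemma sum_prod (R : realType) (m : nat) n (theta : R) (F : 'I_n -> ranking m -> R) :
  \sum_(P : profile m n) pc_prob theta P * \prod_v F v (P v)
  = \prod_v E1 theta (F v).
Proof.
rewrite /E1 bigA_distr_bigA /=; apply: eq_bigr => P _.
by rewrite /pc_prob -big_split.
Qed.

Lemma pc_ge0 (R : realType) (m : nat) n (theta : R) (P : profile m n) :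
  0 <= theta <= 1 -> 0 <= pc_prob theta P.
Proof. by move=> h; apply: prodr_ge0 => v _; exact: pr1_ge0. Qed.

Lemma pc_sum1 (R : realType) (m : nat) n (theta : R) :
  \sum_(P : profile m n) pc_prob theta P = 1.
Proof.
transitivity (\prod_(v : 'I_n) E1 theta (fun _ : ranking m => 1)).
  rewrite -sum_prod; apply: eq_bigr => P _; by rewrite big1 ?mulr1.
by rewrite big1 // => v _; exact: E1_1.
Qed.

Lemma prod_if1 (R : realType) n (v : 'I_n) (c : 'I_n -> R) :
  \prod_(u : 'I_n) (if u == v then c u else 1) = c v.
Proof. by rewrite -big_mkcond big_pred1_eq. Qed.

Lemma sum_if0 (R : realType) n (v : 'I_n) (c : 'I_n -> R) :
  \sum_(u : 'I_n) (if u == v then c u else 0) = c v.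
Proof. by rewrite -big_mkcond big_pred1_eq. Qed.

Lemma E1_lin (R : realType) (m : nat) (theta : R) (g : ranking m -> R) (c : R) :
  E1 theta (fun r => c * g r) = c * E1 theta g.
Proof.
by rewrite /E1 mulr_sumr; apply: eq_bigr => r _; rewrite mulrCA.
Qed.

Lemma second_moment (R : realType) (m n : nat) (theta : R) (Y : ranking m -> R) :
  E1 theta Y = 0 ->
  \sum_(P : profile m n) pc_prob theta P * (\sum_v Y (P v)) ^+ 2
  = n%:R * E1 theta (fun r => Y r ^+ 2).
Proof.
move=> EY.
pose G (v w u : 'I_n) (r : ranking m) :=
  (if u == v then Y r else 1) * (if u == w then Y r else 1).
have H1 : forall P : profile m n, (\sum_v Y (P v)) ^+ 2 =
    \sum_v \sum_w \prod_u G v w u (P u).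
  move=> P; rewrite expr2 big_distrl /=; apply: eq_bigr => v _.
  rewrite big_distrr /=; apply: eq_bigr => w _.
  rewrite /G big_split /=.
  by rewrite (prod_if1 v (fun u => Y (P u))) (prod_if1 w (fun u => Y (P u))).
under eq_bigr do rewrite H1 mulr_sumr.
rewrite exchange_big /=.
under eq_bigr do under eq_bigr do rewrite mulr_sumr.
under eq_bigr do rewrite exchange_big /=.
have H2 : forall v w, \sum_(P : profile m n) pc_prob theta P * \prod_u G v w u (P u)
    = if w == v then E1 theta (fun r => Y r ^+ 2) else 0.
  move=> v w; rewrite sum_prod.
  case: eqP => [->|/eqP wv].
    rewrite -(prod_if1 v (fun _ => E1 theta (fun r => Y r ^+ 2))).
    apply: eq_bigr => u _; rewrite /G.
    case: eqP => _; first by apply: eq_bigr => r _; rewrite expr2.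
    transitivity (E1 theta (fun _ : ranking m => 1)); last exact: E1_1.
    by apply: eq_bigr => r _; rewrite mulr1.
  rewrite (bigD1 v) //= /G eqxx.
  have -> : E1 theta (fun r => Y r * (if v == w then Y r else 1)) = 0.
    by rewrite eq_sym (negbTE wv) -EY; apply: eq_bigr => r _; rewrite mulr1.
  by rewrite mul0r.
under eq_bigr do under eq_bigr do rewrite H2.
under eq_bigr => v _ do rewrite (sum_if0 v (fun _ => E1 theta (fun r => Y r ^+ 2))).
by rewrite sumr_const card_ord mulr_natl.
Qed.

Lemma pr1_sum (R : realType) (m : nat) (theta : R) :
  \sum_(r : ranking m) pr1 theta r = 1.
Proof.
rewrite -(E1_1 m theta); apply: eq_bigr => r _; by rewrite mulr1.
Qed.

Lemma E1_center (R : realType) (m : nat) (theta : R) (h : ranking m -> R) :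
  E1 theta (fun r => h r - E1 theta h) = 0.
Proof.
rewrite {1}/E1; under eq_bigr do rewrite mulrBr.
by rewrite sumrB -mulr_suml pr1_sum mul1r subrr.
Qed.

Lemma cheb (R : realType) (m : nat) (theta : R) (h : ranking m -> R) n :
  0 <= theta <= 1 -> 0 < E1 theta h -> (0 < n)%N ->
  \sum_(P : profile m n | \sum_v h (P v) <= 0) pc_prob theta P
  <= E1 theta (fun r => (h r - E1 theta h) ^+ 2) / (E1 theta h) ^+ 2 / n%:R.
Proof.
move=> th mu0 n0.
set mu := E1 theta h.
set V := E1 theta _.
have n0' : 0 < n%:R :> R by rewrite ltr0n.
have a0 : 0 < n%:R * mu by rewrite mulr_gt0.
have HY : forall P : profile m n,
    \sum_v (h (P v) - mu) = \sum_v h (P v) - n%:R * mu.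
  by move=> P; rewrite sumrB sumr_const card_ord mulr_natl.
apply: (@le_trans _ _ (\sum_(P : profile m n | \sum_v h (P v) <= 0)
   pc_prob theta P * ((\sum_v (h (P v) - mu)) ^+ 2 / (n%:R * mu) ^+ 2))).
  apply: ler_sum => P hP.
  rewrite -{1}[pc_prob theta P]mulr1 ler_wpM2l ?pc_ge0 //.
  rewrite ler_pdivlMr ?exprn_gt0 // mul1r HY.
  set x := \sum_v h (P v) in hP *; set a := n%:R * mu in a0 *.
  nra.
apply: (@le_trans _ _ (\sum_(P : profile m n)
   pc_prob theta P * ((\sum_v (h (P v) - mu)) ^+ 2 / (n%:R * mu) ^+ 2))).
  rewrite [X in _ <= X](bigID (fun P : profile m n => \sum_v h (P v) <= 0)) /=.
  rewrite lerDl; apply: sumr_ge0 => P _.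
  by rewrite mulr_ge0 ?pc_ge0 // divr_ge0 ?sqr_ge0.
under eq_bigr do rewrite mulrA.
rewrite -mulr_suml (@second_moment R m n theta (fun r => h r - mu)); last exact: E1_center.
rewrite -/V exprMn.
have hn : n%:R != 0 :> R by rewrite lt0r_neq0.
have hm : mu != 0 by rewrite lt0r_neq0.
rewrite le_eqVlt; apply/orP; left; apply/eqP.
by field; rewrite hn hm.
Qed.


Definition Kc (R : realType) (m : nat) (theta : R) (I : finType)
  (h : I -> ranking m -> R) : R :=
  \sum_i E1 theta (fun r => (h i r - E1 theta (h i)) ^+ 2) / (E1 theta (h i)) ^+ 2.

Lemma union_bound (R : realType) (m : nat) (theta : R) (I : finType)
  (h : I -> ranking m -> R) n :
  0 <= theta <= 1 -> (forall i, 0 < E1 theta (h i)) -> (0 < n)%N ->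
  \sum_(P : profile m n | [exists i, \sum_v h i (P v) <= 0]) pc_prob theta P
  <= Kc theta h / n%:R.
Proof.
move=> th hpos n0.
apply: (@le_trans _ _ (\sum_i \sum_(P : profile m n | \sum_v h i (P v) <= 0)
    pc_prob theta P)).
  under [X in _ <= X]eq_bigr do rewrite big_mkcond.
  rewrite exchange_big /= [X in X <= _]big_mkcond /=.
  apply: ler_sum => P _.
  case: existsP => [[i hi]|_]; last first.
    by apply: sumr_ge0 => i _; case: ifP => // _; exact: pc_ge0.
  rewrite (bigD1 i) //= hi lerDl.
  by apply: sumr_ge0 => j _; case: ifP => // _; exact: pc_ge0.
rewrite /Kc mulr_suml; apply: ler_sum => i _.
exact: cheb.
Qed.

Lemma plu_top_ne (m n : nat) (c0 : 'I_m) (P : profile m n) :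
  exists c, c \in plu_top P.
Proof.
case: (@arg_maxnP _ c0 xpredT (plu_score P)) => // i _ Hi.
by exists i; rewrite inE; apply/forallP => d; exact: Hi.
Qed.

Lemma plu_in_top (m n : nat) (tb : {set 'I_m} -> 'I_m) (c0 : 'I_m)
  (P : profile m n) : tiebreak tb -> plu tb P \in plu_top P.
Proof.
move=> htb; apply: htb; apply/set0Pn.
exact: plu_top_ne c0 P.
Qed.

Lemma plu_win (m n : nat) (tb : {set 'I_m} -> 'I_m) (P : profile m n) c :
  tiebreak tb -> (forall d, d != c -> (plu_score P d < plu_score P c)%N) ->
  plu tb P = c.
Proof.
move=> htb H.
have := plu_in_top c P htb; rewrite inE => /forallP /(_ c).
set x := plu tb P => hx.
apply/eqP; apply: contraT => xc.
by have := H x xc; rewrite ltnNge hx.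
Qed.

Lemma first_pref (m : nat) (r : ranking m) c c0 :
  c != c0 -> val (r c) == 0%N -> prefers r c c0.
Proof.
move=> cc0 /eqP h; rewrite /prefers h lt0n.
apply: contra cc0 => /eqP h2.
apply/eqP; apply: (@perm_inj _ r); apply: val_inj; by rewrite /= h h2.
Qed.

Lemma noCM (m n : nat) (tb : {set 'I_m} -> 'I_m) (P : profile m n) (c0 : 'I_m) :
  tiebreak tb -> val c0 = 0%N ->
  (forall c, c != c0 ->
     (#|[set v | prefers (P v) c c0]| < #|[set v | val (P v c0) == 0%N]|)%N) ->
  ~~ CM (@plu m n tb) P.
Proof.
move=> htb hc0 H.
have wP : plu tb P = c0.
  apply: plu_win => // d hd.
  rewrite /plu_score; apply: leq_ltn_trans; last exact: (H d hd).
  apply: subset_leq_card; apply/fintype.subsetP => v; rewrite !inE.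
  exact: first_pref.
apply/existsP => [[Q /andP [hne /forallP hQ]]].
rewrite wP in hne hQ.
set c := plu tb Q in hne hQ.
have := plu_in_top c0 Q htb; rewrite inE => /forallP /(_ c0) hc.
have h1 : (plu_score Q c <= #|[set v | prefers (P v) c c0]|)%N.
  apply: subset_leq_card; apply/fintype.subsetP => v; rewrite !inE => hv.
  have := hQ v; case: (boolP (Q v == P v)) => [/eqP e|ne] /= hp.
    by rewrite e in hv; exact: first_pref.
  by [].
have h2 : (#|[set v | val (P v c0) == 0%N]| <= plu_score Q c0)%N.
  apply: subset_leq_card; apply/fintype.subsetP => v; rewrite !inE => hv.
  have := hQ v; case: (boolP (Q v == P v)) => [/eqP e|ne] /= hp.
    by rewrite e.
  by move: hp; rewrite /prefers (eqP hv) ltn0.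
have := H c hne.
move: hc; rewrite -/c => hc.
by rewrite ltnNge (leq_trans h2 (leq_trans hc h1)).
Qed.

Lemma yesCM (m n : nat) (tb : {set 'I_m} -> 'I_m) (P : profile m n)
  (c0 c1 : 'I_m) :
  tiebreak tb -> val c0 = 0%N -> val c1 = 1%N ->
  (forall d, d != c0 ->
     (#|[set v | val (P v d) == 0%N]| < #|[set v | val (P v c0) == 0%N]|)%N) ->
  (forall d, d != c1 ->
     (#|[set v | val (P v d) == 0%N]| < #|[set v | prefers (P v) c1 c0]|)%N) ->
  CM (@plu m n tb) P.
Proof.
move=> htb hc0 hc1 Ha Hb.
have wP : plu tb P = c0 by apply: plu_win.
pose s1 : ranking m := tperm c0 c1.
have s1c1 : s1 c1 = c0 by rewrite /s1 tpermR.
pose Q : profile m n :=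
  [ffun v => if prefers (P v) c1 c0 then s1 else P v].
have wQ : plu tb Q = c1.
  apply: plu_win => // d hd.
  apply: (@leq_ltn_trans #|[set v | val (P v d) == 0%N]|).
    apply: subset_leq_card; apply/fintype.subsetP => v; rewrite !inE ffunE.
    case: ifP => // _ hv.
    have : s1 d = s1 c1 by rewrite s1c1; apply: val_inj; rewrite /= hc0 (eqP hv).
    by move/perm_inj => e; rewrite e eqxx in hd.
  apply: (leq_trans (Hb d hd)).
  apply: subset_leq_card; apply/fintype.subsetP => v; rewrite !inE ffunE => ->.
  by rewrite s1c1 hc0.
apply/existsP; exists Q; rewrite wQ wP; apply/andP; split.
  by apply/eqP => e; move: hc1; rewrite e hc0.
apply/forallP => v; rewrite ffunE; case: ifP => _.
  by rewrite implybT.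
by rewrite eqxx.
Qed.

Lemma sum_first (R : realType) (m : nat) (d : 'I_m) :
  m%:R * \sum_(r : ranking m) ((val (r d) == 0%N) : nat)%:R = (m`!)%:R :> R.
Proof.
have m0 : (0 < m)%N := leq_ltn_trans (leq0n _) (ltn_ord d).
pose o : 'I_m := Ordinal m0.
have eqd : forall d' : 'I_m,
    \sum_(r : ranking m) ((val (r d') == 0%N) : nat)%:R
    = \sum_(r : ranking m) ((val (r d) == 0%N) : nat)%:R :> R.
  move=> d'; rewrite (reindex_inj (mulgI (tperm d d'))) /=.
  by apply: eq_bigr => r _; rewrite permM tpermR.
transitivity (\sum_(d' : 'I_m)
    \sum_(r : ranking m) ((val (r d') == 0%N) : nat)%:R :> R).
  rewrite [RHS](eq_bigr (fun _ => \sum_(r : ranking m) ((val (r d) == 0%N) : nat)%:R)).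
    by rewrite sumr_const card_ord mulr_natl.
  by move=> d' _; exact: eqd.
rewrite exchange_big /=.
rewrite (eq_bigr (fun _ => 1)); first by rewrite sumr_const card_rank.
move=> r _.
rewrite (bigD1 ((r^-1)%g o)) //= permKV eqxx big1 ?addr0 // => d' hd'.
case: eqP => // e; exfalso; move/negP: hd'; apply.
apply/eqP; rewrite -[d'](permK r); congr (_ _); exact: val_inj.
Qed.

Lemma sum_pref (R : realType) (m : nat) (c c0 : 'I_m) :
  c != c0 ->
  2 * \sum_(r : ranking m) (prefers r c c0 : nat)%:R = (m`!)%:R :> R.
Proof.
move=> cc0.
have e : \sum_(r : ranking m) (prefers r c c0 : nat)%:R
       = \sum_(r : ranking m) (prefers r c0 c : nat)%:R :> R.
  rewrite (reindex_inj (mulgI (tperm c c0))) /=.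
  by apply: eq_bigr => r _; rewrite /prefers !permM tpermL tpermR.
rewrite mulr_natl mulr2n {2}e -big_split /=.
rewrite (eq_bigr (fun _ => 1)); first by rewrite sumr_const card_rank.
move=> r _; rewrite /prefers.
have hne : val (r c) != val (r c0).
  apply: contra cc0 => /eqP h; apply/eqP; apply: (@perm_inj _ r); exact: val_inj.
case: ltngtP hne => //= _ _; by rewrite ?addr0 ?add0r.
Qed.

Definition hab (R : realType) (m : nat) (a b : ranking m -> bool) (r : ranking m) : R :=
  (a r : nat)%:R - (b r : nat)%:R.

Lemma E1_hab (R : realType) (m : nat) (theta : R) (a b : ranking m -> bool) :
  E1 theta (@hab R m a b) = theta * ((a 1%g : nat)%:R - (b 1%g : nat)%:R)
    + (1 - theta) / (m`!)%:R *
      (\sum_(r : ranking m) (a r : nat)%:R - \sum_(r : ranking m) (b r : nat)%:R).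
Proof. by rewrite E1E /hab sumrB. Qed.

Lemma cnt_sum (R : realType) (n : nat) (b : 'I_n -> bool) :
  \sum_v (b v : nat)%:R = (#|[set v | b v]| : nat)%:R :> R.
Proof.
transitivity (\sum_(v in [set v | b v]) (1 : R)); last by rewrite sumr_const.
rewrite [RHS]big_mkcond /=.
by apply: eq_bigr => v _; rewrite inE; case: (b v).
Qed.

Lemma hab_nb (R : realType) (m n : nat) (P : profile m n) (a b : ranking m -> bool) :
  ~~ (\sum_v @hab R m a b (P v) <= 0) ->
  (#|[set v | b (P v)]| < #|[set v | a (P v)]|)%N.
Proof.
rewrite /hab sumrB (cnt_sum R (fun v => a (P v))) (cnt_sum R (fun v => b (P v))).
by rewrite -ltNge subr_gt0 ltr_nat.
Qed.

Lemma sum_sub (R : realType) (T : finType) (A B : pred T) (w : T -> R) :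
  (forall x, A x -> B x) -> (forall x, 0 <= w x) ->
  \sum_(x | A x) w x <= \sum_(x | B x) w x.
Proof.
move=> AB w0; rewrite [X in X <= _]big_mkcond [X in _ <= X]big_mkcond.
apply: ler_sum => x _; case: ifP => hA; first by rewrite (AB x hA).
by case: ifP.
Qed.
Local Open Scope classical_set_scope.
Local Open Scope ring_scope.

Lemma cvg_bound (R : realType) (x : nat -> R) (l K : R) :
  (forall n, (0 < n)%N -> `|l - x n| <= K / n%:R) -> x @ \oo --> l.
Proof.
move=> H; apply/cvgrPdist_le => e e0.
near=> n.
have n0 : (0 < n)%N by near: n; exact: nbhs_infty_ge 1%N.
apply: le_trans (H n n0) _.
have hn : 0 < n%:R :> R by rewrite ltr0n.
rewrite ler_pdivrMr //.
have : K / e <= n%:R by near: n; exact: nbhs_infty_ger.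
by rewrite ler_pdivrMr // mulrC.
Unshelve. all: by end_near. Qed.

Unset Implicit Arguments.
Set Strict Implicit.

Theorem theorem3p3 (R : realType) (m : nat) (tb : {set 'I_m} -> 'I_m)
  (theta : R) :
  (2 <= m)%N -> tiebreak tb -> 0 < theta -> theta <= 1 ->
  (theta < theta_c_plu R m ->
     (fun n : nat => cm_rate n tb theta) @ \oo --> (1 : R)) /\
  (theta_c_plu R m < theta ->
     (fun n : nat => cm_rate n tb theta) @ \oo --> (0 : R)).
Proof.
move=> m2 htb t0 t1.
have m0 : (0 < m)%N by apply: ltnW.
pose c0 : 'I_m := Ordinal m0.
pose c1 : 'I_m := Ordinal m2.
have vc0 : val c0 = 0%N by [].
have vc1 : val c1 = 1%N by [].
have th : 0 <= theta <= 1 by rewrite ltW.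
have M0 : 0 < (m`!)%:R :> R by rewrite ltr0n fact_gt0.
have mr2 : 2 <= m%:R :> R by rewrite (ler_nat R 2 m).
have mr0 : 0 < m%:R :> R by apply: lt_le_trans mr2.
have hX : forall d : 'I_m,
    \sum_(r : ranking m) ((val (r d) == 0%N) : nat)%:R = (m`!)%:R / m%:R :> R.
  move=> d; rewrite -(sum_first R d) [m%:R * _]mulrC mulfK //; exact: lt0r_neq0.
have hY : forall c : 'I_m, c != c0 ->
    \sum_(r : ranking m) (prefers r c c0 : nat)%:R = (m`!)%:R / 2 :> R.
  move=> c hc; rewrite -(sum_pref R hc) [2 * _]mulrC mulfK //.
have hM : (m`!)%:R != 0 :> R by exact: lt0r_neq0.
have hm : m%:R != 0 :> R by exact: lt0r_neq0.
have h3 : 0 < 3 * m%:R - 2 :> R by lra.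
rewrite /theta_c_plu.
split=> hth.
-
  have hth' : theta * (3 * m%:R - 2) < m%:R - 2 by rewrite -ltr_pdivlMr.
  pose h1 := fun i : 'I_m * bool =>
    if i.2 then
      (if i.1 == c0 then (fun _ : ranking m => 1 : R)
       else @hab R m (fun r => val (r c0) == 0%N) (fun r => val (r i.1) == 0%N))
    else
      (if i.1 == c1 then (fun _ : ranking m => 1 : R)
       else @hab R m (fun r => prefers r c1 c0) (fun r => val (r i.1) == 0%N)).
  have hpos : forall i, 0 < E1 theta (h1 i).
    case=> d [] /=; rewrite /h1 /=.
      case: eqP => [_|/eqP hd]; first by rewrite E1_1.
      rewrite E1_hab !hX subrr mulr0 addr0 !perm1 vc0 eqxx.
      have -> : (val d == 0%N) = false.
        by apply/negbTE; apply: contra hd => /eqP e; apply/eqP; apply: val_inj.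
      by rewrite subr0 mulr1.
    case: eqP => [_|/eqP hd]; first by rewrite E1_1.
    rewrite E1_hab hX (hY c1) ?perm1; last by apply/eqP => e; move: vc1; rewrite e.
    rewrite /prefers /= !perm1 vc1 vc0 /=.
    have -> : (1 - theta) / (m`!)%:R * ((m`!)%:R / 2 - (m`!)%:R / m%:R)
        = (1 - theta) * (m%:R - 2) / (2 * m%:R).
      by field; rewrite hm hM.
    have ht : 0 < (1 - theta) * (m%:R - 2) / (2 * m%:R) - theta.
      have -> : (1 - theta) * (m%:R - 2) / (2 * m%:R) - theta
          = ((m%:R - 2) - theta * (3 * m%:R - 2)) / (2 * m%:R) by field; rewrite ?hm ?hM.
      by apply: divr_gt0; [rewrite subr_gt0 | rewrite mulr_gt0].
    case: (val d == 0%N) => /=; lra.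
  apply: (@cvg_bound R _ 1 (Kc theta h1)) => n n0.
  have tot := pc_sum1 m n theta.
  rewrite (bigID (fun P : profile m n => CM (@plu m n tb) P)) /= in tot.
  rewrite /cm_rate -{1}tot addrC addrK ger0_norm; last first.
    by apply: sumr_ge0 => P _; exact: pc_ge0.
  apply: le_trans; last exact: (union_bound th hpos n0).
  apply: sum_sub; last by move=> P; exact: pc_ge0.
  move=> P; apply: contraLR => /existsPn hn; rewrite negbK.
  apply: (yesCM htb vc0 vc1).
    move=> d hd; have := hn (d, true); rewrite /h1 /= (negbTE hd).
    by move/hab_nb.
  move=> d hd; have := hn (d, false); rewrite /h1 /= (negbTE hd).
  by move/hab_nb.
-
  have hth' : m%:R - 2 < theta * (3 * m%:R - 2) by rewrite -ltr_pdivrMr.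
  pose h2 := fun c : 'I_m =>
    if c == c0 then (fun _ : ranking m => 1 : R)
    else @hab R m (fun r => val (r c0) == 0%N) (fun r => prefers r c c0).
  have hpos : forall c, 0 < E1 theta (h2 c).
    move=> c; rewrite /h2; case: eqP => [_|/eqP hc]; first by rewrite E1_1.
    rewrite E1_hab hX (hY c hc) /prefers !perm1 vc0 eqxx ltn0 /=.
    have -> : theta * (1 - 0) + (1 - theta) / (m`!)%:R *
        ((m`!)%:R / m%:R - (m`!)%:R / 2)
        = (theta * (3 * m%:R - 2) - (m%:R - 2)) / (2 * m%:R) by field; rewrite ?hm ?hM.
    by apply: divr_gt0; [rewrite subr_gt0 | rewrite mulr_gt0].
  apply: (@cvg_bound R _ 0 (Kc theta h2)) => n n0.
  rewrite sub0r normrN ger0_norm; last first.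
    by apply: sumr_ge0 => P _; exact: pc_ge0.
  apply: le_trans; last exact: (union_bound th hpos n0).
  apply: sum_sub; last by move=> P; exact: pc_ge0.
  move=> P; apply: contraLR => /existsPn hn.
  apply: (noCM htb vc0) => c hc.
  have := hn c; rewrite /h2 (negbTE hc).
  by move/hab_nb.
Qed.
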